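(* Fix $n\ge1$. For each $\delta\in\mathrm{MAD}(c^\times)$, the word $\Psi(\delta)$ lies in $\overline{\mathcal{M}}_{n+1}$ and $|\delta|=n-\#_{\mathtt{U}}(\Psi(\delta))$.
   Context: Place points $1,\ldots,n+1$ left to right on a horizontal line. An arc is a curve from a point $i$ to a point $j>i$ moving monotonically rightward and passing above or below each of $i+1,\ldots,j-1$; arcs are identified if they have the same endpoints and pass above the same points. A noncrossing arc diagram is a set of arcs that can be drawn so that no two share a left endpoint, no two share a right endpoint, and no two cross in their interiors; $|\delta|$ is its number of arcs. An arc from $i$ to $j$ is $c^\times$-sortable if, for each $k$ with $i<k<j$, it passes above $k$ when $k$ is odd and below $k$ when $k$ is even. $\mathrm{MAD}(c^\times)$ is the set of noncrossing arc diagrams consisting of $c^\times$-sortable arcs that are maximal under inclusion among such diagrams. For $\delta\in\mathrm{MAD}(c^\times)$, $\Psi(\delta)=\mathtt{M}_1\cdots\mathtt{M}_{n+1}$ where $\mathtt{M}_i=\mathtt{U}$ if $i\le n$ and $i+1$ is not the right endpoint of an arc of $\delta$; $\mathtt{M}_i=\mathtt{D}$ if $i\ge2$ and $i-1$ is not the left endpoint of an arc of $\delta$; and $\mathtt{M}_i=\mathtt{H}$ otherwise (it is part of the setup that the first two cases never both apply). A Motzkin path of length $m$ is a word in $\mathtt{U}$ (up step $(1,1)$), $\mathtt{D}$ (down step $(1,-1)$), $\mathtt{H}$ (horizontal step $(1,0)$) of length $m$ with equally many $\mathtt{U}$'s and $\mathtt{D}$'s and with every prefix having at least as many $\mathtt{U}$'s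 as $\mathtt{D}$'s. A peak is a consecutive occurrence $\mathtt{U}\mathtt{D}$; its height is $\#_\mathtt{U}(P)-\#_\mathtt{D}(P)$ where $P$ is the prefix ending with that $\mathtt{U}$. $\overline{\mathcal{M}}_{m}$ is the set of Motzkin paths of length $m$ with no peak of height $1$; $\#_\mathtt{U}(P)$ counts $\mathtt{U}$'s in $P$. *)

(* Defs.v *)
From mathcomp Require Import all_boot all_order all_algebra.
Set Implicit Arguments. Unset Strict Implicit. Unset Printing Implicit Defensive.

(* Points 1, ..., n+1 are elements of 'I_(n.+2) (index 0 is unused).
   An arc is (left endpoint, right endpoint, set of points it passes ABOVE);
   it passes below every other interior point. *)
Definition arc_t (n : nat) := ('I_n.+2 * 'I_n.+2 * {set 'I_n.+2})%type.

Section Arcs.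
Variable n : nat.
Implicit Types (a b : arc_t n) (x : 'I_n.+2).

Definition al a : nat := a.1.1.
Definition ar a : nat := a.1.2.

Definition is_arc a : bool :=
  [&& 0 < al a, al a < ar a & a.2 \subset [set k : 'I_n.+2 | al a < k < ar a]].

Definition interior a x : bool := al a < x < ar a.
Definition in_range a x : bool := al a <= x <= ar a.
Definition endpt a x : bool := (x == al a :> nat) || (x == ar a :> nat).

(* at the abscissa x, arc a is forced to be drawn strictly above arc b *)
Definition over a b x : bool :=
  [&& in_range a x, in_range b x &
   [|| [&& interior a x, interior b x, x \in a.2 & x \notin b.2],
       [&& endpt b x, interior a x & x \in a.2] |
       [&& endpt a x, interior b x & x \notin b.2]]].

(* two arcs cross in their interiors iff the forced relative position
   changes along their common x-range *)
Definition crossing a b : bool := [exists x, over a b x] && [exists x, over b a x].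

Definition noncrossing_diagram (d : {set arc_t n}) : bool :=
  [forall a in d, is_arc a] &&
  [forall a in d, forall b in d,
     (a != b) ==> [&& al a != al b, ar a != ar b & ~~ crossing a b]].

Definition csortable a : bool :=
  a.2 == [set k : 'I_n.+2 | (al a < k < ar a) && odd k].

Definition csort_diagram (d : {set arc_t n}) : bool :=
  noncrossing_diagram d && [forall a in d, csortable a].

Definition MAD (d : {set arc_t n}) : Prop :=
  csort_diagram d /\
  forall d' : {set arc_t n}, csort_diagram d' -> d \subset d' -> d' = d.
End Arcs.

Inductive step := U | D | H.

Definition isU (s : step) : bool := if s is U then true else false.
Definition isD (s : step) : bool := if s is D then true else false.
Definition countU (w : seq step) : nat := count isU w.
Definition countD (w : seq step) : nat := count isD w.

Definition Psi_letter (n : nat) (d : {set arc_t n}) (i : nat) : step :=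
  if (i <= n) && ~~ [exists a in d, ar a == i.+1] then U
  else if (2 <= i) && ~~ [exists a in d, al a == i.-1] then D
  else H.

Definition Psi (n : nat) (d : {set arc_t n}) : seq step :=
  [seq Psi_letter d i | i <- iota 1 n.+1].

Definition motzkin (m : nat) (w : seq step) : Prop :=
  size w = m /\ countU w = countD w /\
  forall k, k <= size w -> countD (take k w) <= countU (take k w).

(* no peak U D whose U ends a prefix of height 1 (positions i, i+1, 0-based) *)
Definition no_peak_height1 (w : seq step) : Prop :=
  forall i, i.+1 < size w -> nth H w i = U -> nth H w i.+1 = D ->
    countU (take i.+1 w) <> (countD (take i.+1 w)).+1.

Definition Mbar (m : nat) (w : seq step) : Prop := motzkin m w /\ no_peak_height1 w.

(* Main.v *)
Require Import Defs.
From mathcomp Require Import all_boot all_order all_algebra.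
From mathcomp Require Import zify.
Set Implicit Arguments. Unset Strict Implicit. Unset Printing Implicit Defensive.

Section S.
Variable n : nat.
Implicit Types (a b : arc_t n) (x : 'I_n.+2) (d : {set arc_t n}).

Lemma over_noint a b x : Defs.over a b x || Defs.over b a x -> interior a x || (endpt a x && interior b x).
Proof.
rewrite /Defs.over.
case: (interior a x) (interior b x) (endpt a x) (endpt b x) => [] [] [] [] /=;
rewrite ?andbF ?andbT ?orbF //.
Qed.

Lemma cs_mem a x : csortable a -> (x \in a.2) = interior a x && odd x.
Proof. by move=> /eqP ->; rewrite inE. Qed.

Lemma over_cs a b x : csortable a -> csortable b -> Defs.over a b x ->
  (endpt b x && interior a x && odd x) || (endpt a x && interior b x && ~~ odd x).
Proof.
move=> Ha Hb; rewrite /Defs.over (cs_mem x Ha) (cs_mem x Hb).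
case: (interior a x) (interior b x) (endpt a x) (endpt b x) (odd x) => [] [] [] [] [] /=;
rewrite ?andbF ?andbT ?orbF //.
Qed.

Lemma add_arc d a : MAD d -> is_arc a -> csortable a ->
  (forall b, b \in d -> al b != al a) -> (forall b, b \in d -> ar b != ar a) ->
  (forall b, b \in d -> ~~ crossing a b && ~~ crossing b a) -> False.
Proof.
move=> [Hcs Hmax] Ha Hca HL HR HX.
have Hd' : csort_diagram (a |: d).
  move: Hcs => /andP[/andP[/forallP Harc /forallP Hpair] /forallP Hsort].
  apply/andP; split; first (apply/andP; split).
  - apply/forallP => x; apply/implyP; rewrite in_setU1 => /orP[/eqP -> //|Hx].
    exact: (implyP (Harc x) Hx).
  - apply/forallP => x; apply/implyP; rewrite in_setU1 => /orP[/eqP ->|Hx];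
    apply/forallP => y; apply/implyP; rewrite in_setU1 => /orP[/eqP ->|Hy].
    + by rewrite eqxx.
    + apply/implyP => _; move/andP: (HX y Hy) => [-> _].
      by rewrite eq_sym (HL y Hy) eq_sym (HR y Hy).
    + apply/implyP => _; move/andP: (HX x Hx) => [_ ->].
      by rewrite (HL x Hx) (HR x Hx).
    + exact: (implyP (forallP (implyP (Hpair x) Hx) y) Hy).
  - apply/forallP => x; apply/implyP; rewrite in_setU1 => /orP[/eqP -> //|Hx].
    exact: (implyP (Hsort x) Hx).
have := Hmax _ Hd' (subsetUr _ _) => Heq.
have : a \in d by rewrite -Heq setU11.
by move=> /HL; rewrite eqxx.
Qed.

Lemma al_inj d a b : noncrossing_diagram d -> a \in d -> b \in d -> al a = al b -> a = b.
Proof.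
move=> /andP[_ /forallP Hp] Ha Hb E; apply/eqP; apply/negPn/negP => Hne.
move: (implyP (implyP (forallP (implyP (Hp a) Ha) b) Hb) Hne) => /andP[].
by rewrite E eqxx.
Qed.

Lemma ar_inj d a b : noncrossing_diagram d -> a \in d -> b \in d -> ar a = ar b -> a = b.
Proof.
move=> /andP[_ /forallP Hp] Ha Hb E; apply/eqP; apply/negPn/negP => Hne.
move: (implyP (implyP (forallP (implyP (Hp a) Ha) b) Hb) Hne) => /and3P[_].
by rewrite E eqxx.
Qed.

Lemma sum_ex d (P : pred (arc_t n)) :
  (forall a b, a \in d -> b \in d -> P a -> P b -> a = b) ->
  \sum_(a in d) (P a : nat) = [exists a in d, P a].
Proof.
move=> Hinj; case: existsP => [[a0 /andP[Ha0 Pa0]] | Hne].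
  rewrite (bigD1 a0) //= Pa0 big1 // => b /andP[Hb Hba].
  apply/eqP; rewrite eqb0; apply/negP => Pb; move/eqP: Hba; apply.
  exact: Hinj.
rewrite big1 // => b Hb; apply/eqP; rewrite eqb0; apply/negP => Pb.
by apply: Hne; exists b; rewrite Hb Pb.
Qed.

Definition mk_arc (x y : 'I_n.+2) : arc_t n := (x, y, [set k : 'I_n.+2 | (x < k < y) && odd k]).

Lemma mk_cs (x y : 'I_n.+2) : csortable (mk_arc x y).
Proof. by rewrite /csortable eqxx. Qed.

Lemma mk_isarc (x y : 'I_n.+2) : 0 < x -> x < y -> is_arc (mk_arc x y).
Proof.
move=> h1 h2; rewrite /is_arc /al /ar /= h1 h2 /=.
by apply/subsetP => k; rewrite !inE => /andP[].
Qed.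

Lemma MAD_cs d b : MAD d -> b \in d -> csortable b.
Proof. by move=> [/andP[_ /forallP H] _] Hb; exact: (implyP (H b) Hb). Qed.

Lemma MAD_arc d b : MAD d -> b \in d -> is_arc b.
Proof. by move=> [/andP[/andP[/forallP H _] _] _] Hb; exact: (implyP (H b) Hb). Qed.

Lemma MAD_nc d : MAD d -> noncrossing_diagram d.
Proof. by move=> [/andP[H _] _]. Qed.

Lemma disj d j : MAD d -> 1 <= j -> j.+2 <= n.+1 ->
  ~~ [exists a in d, ar a == j.+2] -> ~~ [exists a in d, al a == j] -> False.
Proof.
move=> Hd Hj1 Hj2 HR HL.
have Ej : (inord j : 'I_n.+2) = j :> nat by rewrite inordK //; lia.
have Ej2 : (inord j.+2 : 'I_n.+2) = j.+2 :> nat by rewrite inordK //; lia.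
set a := mk_arc (inord j) (inord j.+2).
have Eal : al a = j by rewrite /al /=; exact: Ej.
have Ear : ar a = j.+2 by rewrite /ar /=; exact: Ej2.
apply: (add_arc (a := a) Hd).
- by apply: mk_isarc; rewrite ?Ej ?Ej2; lia.
- exact: mk_cs.
- move=> b Hb; rewrite Eal; apply/negP => /eqP E; move/negP: HL; apply.
  by apply/existsP; exists b; rewrite Hb E eqxx.
- move=> b Hb; rewrite Ear; apply/negP => /eqP E; move/negP: HR; apply.
  by apply/existsP; exists b; rewrite Hb E eqxx.
move=> b Hb.
have Hcb := MAD_cs Hd Hb.
have Hca : csortable a := mk_cs _ _.
have P1 : forall x, Defs.over a b x -> odd j.+1.
  move=> x /(over_cs Hca Hcb); rewrite /interior /endpt Eal Ear.
  case/orP => [/andP[/andP[_ h] o] | /andP[/andP[h _] o]].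
    have -> : j.+1 = x by lia.
    done.
  by case/orP: h => /eqP E; move: o; rewrite E /= ?negbK.
have P2 : forall x, Defs.over b a x -> ~~ odd j.+1.
  move=> x /(over_cs Hcb Hca); rewrite /interior /endpt Eal Ear.
  case/orP => [/andP[/andP[h _] o] | /andP[/andP[_ h] o]].
    by case/orP: h => /eqP E; move: o; rewrite E /= ?negbK.
  have -> : j.+1 = x by lia.
  done.
apply/andP; split; apply/negP => /andP[/existsP[x1 H1] /existsP[x2 H2]].
- by move: (P1 _ H1) (P2 _ H2) => ->.
- by move: (P1 _ H2) (P2 _ H1) => ->.
Qed.

Lemma nopeak d t : MAD d -> 1 <= t -> t <= n ->
  ~~ [exists a in d, ar a == t.+1] -> ~~ [exists a in d, al a == t] ->
  (forall b, b \in d -> al b < t.+1 -> ar b < t.+1) -> False.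
Proof.
move=> Hd Ht1 Ht2 HR HL Hsep.
have Ej : (inord t : 'I_n.+2) = t :> nat by rewrite inordK //; lia.
have Ej2 : (inord t.+1 : 'I_n.+2) = t.+1 :> nat by rewrite inordK //; lia.
set a := mk_arc (inord t) (inord t.+1).
have Eal : al a = t by rewrite /al /=; exact: Ej.
have Ear : ar a = t.+1 by rewrite /ar /=; exact: Ej2.
apply: (add_arc (a := a) Hd).
- by apply: mk_isarc; rewrite ?Ej ?Ej2; lia.
- exact: mk_cs.
- move=> b Hb; rewrite Eal; apply/negP => /eqP E; move/negP: HL; apply.
  by apply/existsP; exists b; rewrite Hb E eqxx.
- move=> b Hb; rewrite Ear; apply/negP => /eqP E; move/negP: HR; apply.
  by apply/existsP; exists b; rewrite Hb E eqxx.
move=> b Hb.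
have P : forall x, Defs.over a b x || Defs.over b a x -> False.
  move=> x /over_noint; rewrite /interior /endpt Eal Ear.
  case/orP => [/andP[h1 h2] | /andP[h /andP[h1 h2]]]; first lia.
  have := Hsep b Hb.
  by case/orP: h => /eqP E; rewrite E in h1 h2 *; lia.
apply/andP; split; apply/negP => /andP[/existsP[x1 H1] _].
- by apply: (P x1); rewrite H1.
- by apply: (P x1); rewrite H1 orbT.
Qed.

Section Count.
Variable d : {set arc_t n}.
Hypothesis Hd : MAD d.

Definition ER j := [exists a in d, ar a == j].
Definition EL j := [exists a in d, al a == j].
Definition Lc k := \sum_(a in d) (al a < k : nat).
Definition Rc k := \sum_(a in d) (ar a < k : nat).
Definition cU k := count (fun i => isU (Psi_letter d i)) (iota 1 k).
Definition cD k := count (fun i => isD (Psi_letter d i)) (iota 1 k).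

Lemma Lc_S k : Lc k.+1 = Lc k + EL k.
Proof.
rewrite /Lc /EL -(sum_ex (P := fun a => al a == k)); last first.
  by move=> a b Ha Hb /eqP E1 /eqP E2; apply: (al_inj (MAD_nc Hd)) => //; rewrite E1 E2.
rewrite -big_split /=; apply: eq_bigr => a _.
by rewrite ltnS leq_eqVlt; case: ltngtP.
Qed.

Lemma Rc_S k : Rc k.+1 = Rc k + ER k.
Proof.
rewrite /Rc /ER -(sum_ex (P := fun a => ar a == k)); last first.
  by move=> a b Ha Hb /eqP E1 /eqP E2; apply: (ar_inj (MAD_nc Hd)) => //; rewrite E1 E2.
rewrite -big_split /=; apply: eq_bigr => a _.
by rewrite ltnS leq_eqVlt; case: ltngtP.
Qed.

Lemma arc_bounds a : a \in d -> [/\ 0 < al a, al a < ar a & ar a < n.+2].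
Proof.
move=> Ha; have /and3P[h1 h2 _] := MAD_arc Hd Ha.
by split => //; rewrite /ar ltn_ord.
Qed.

Lemma Rc2 : Rc 2 = 0.
Proof.
rewrite /Rc big1 // => a Ha; have [h1 h2 _] := arc_bounds Ha.
by have -> : (ar a < 2) = false by apply/negbTE; rewrite -leqNgt; lia.
Qed.

Lemma Lc0 : Lc 0 = 0.
Proof. by rewrite /Lc big1. Qed.

Lemma EL0 : EL 0 = false.
Proof.
apply/negbTE/negP => /existsP[a /andP[Ha /eqP E]].
by have [h1 _ _] := arc_bounds Ha; rewrite E in h1.
Qed.

Lemma Rc_all : Rc n.+2 = #|d|.
Proof.
rewrite /Rc -sum1_card; apply: eq_bigr => a Ha.
by have [_ _ ->] := arc_bounds Ha.
Qed.

Lemma Lc_all : Lc n.+1 = #|d|.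
Proof.
rewrite /Lc -sum1_card; apply: eq_bigr => a Ha.
have [_ h1 h2] := arc_bounds Ha.
by have -> : al a < n.+1 by lia.
Qed.

Lemma Rc_le k : Rc k.+1 <= Lc k.
Proof.
rewrite /Rc /Lc; apply: leq_sum => a Ha.
have [_ h1 h2] := arc_bounds Ha.
by case: (ltnP (ar a) k.+1) => // h; have -> : al a < k by lia.
Qed.

Lemma isU_letter i : isU (Psi_letter d i) = (i <= n) && ~~ ER i.+1.
Proof. by rewrite /Psi_letter /ER; case: ifP => //; case: ifP. Qed.

Lemma isD_letter i : isD (Psi_letter d i) =
  ~~ ((i <= n) && ~~ ER i.+1) && (2 <= i) && ~~ EL i.-1.
Proof. by rewrite /Psi_letter /ER /EL; case: ifP => //; case: ifP. Qed.

Lemma iotaS1 k : iota 1 k.+1 = iota 1 k ++ [:: k.+1].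
Proof. by have := iotaD 1 k 1; rewrite addn1 add1n. Qed.

Lemma cU_eq k : k <= n -> cU k + Rc k.+2 = k.
Proof.
elim: k => [|k IH] Hk; first by rewrite Rc2.
rewrite /cU iotaS1 count_cat /= -/(cU k) isU_letter Rc_S.
have := IH (ltnW Hk); rewrite Hk /=; case: (ER k.+2) => /=; lia.
Qed.

Lemma cD_eq k : k <= n.+1 -> cD k + Lc k = k.-1.
Proof.
elim: k => [|k IH] Hk; first by rewrite Lc0.
rewrite /cD iotaS1 count_cat /= -/(cD k) isD_letter Lc_S.
have := IH (ltnW Hk).
case: k IH Hk => [|k] IH Hk; first by rewrite EL0 /=; lia.
have Hdj : ((k.+2 <= n) && ~~ ER k.+3) -> EL k.+1.
  move=> /andP[h1 h2]; case E: (EL k.+1) => //; exfalso.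
  apply: (disj (j := k.+1) Hd) => //; try lia; try exact: h2; by rewrite -/(EL k.+1) E.
move: Hdj; rewrite /=.
case: (k.+2 <= n); case: (ER k.+3); case: (EL k.+1) => /=; try lia.
Qed.

Lemma Psi_size : size (Psi d) = n.+1.
Proof. by rewrite /Psi size_map size_iota. Qed.

Lemma countU_take k : k <= n.+1 -> countU (take k (Psi d)) = cU k.
Proof.
move=> Hk; rewrite /countU /Psi -map_take take_iota count_map.
by rewrite (minn_idPl Hk).
Qed.

Lemma countD_take k : k <= n.+1 -> countD (take k (Psi d)) = cD k.
Proof.
move=> Hk; rewrite /countD /Psi -map_take take_iota count_map.
by rewrite (minn_idPl Hk).
Qed.

Lemma nth_Psi i : i < n.+1 -> nth H (Psi d) i = Psi_letter d i.+1.
Proof.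
move=> Hi; rewrite /Psi (nth_map 0); last by rewrite size_iota.
by rewrite nth_iota // add1n.
Qed.

Lemma Rc_lt b0 k : b0 \in d -> al b0 < k -> k <= ar b0 -> Rc k < Lc k.
Proof.
move=> Hb h1 h2; rewrite /Rc /Lc (bigD1 b0) //= [X in _ < X](bigD1 b0) //=.
rewrite h1 (_ : (ar b0 < k) = false); last by apply/negbTE; rewrite -leqNgt.
rewrite add0n add1n ltnS; apply: leq_sum => a /andP[Ha _].
have [_ g1 g2] := arc_bounds Ha.
by case: (ltnP (ar a) k) => // h; have -> : al a < k by lia.
Qed.

End Count.
End S.

Unset Implicit Arguments.
Set Strict Implicit.

Theorem proposition8p9 (n : nat) (hn : 1 <= n) (d : {set arc_t n}) :
  MAD d ->
  Mbar n.+1 (Psi d) /\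
  (#|d|%:Z = n%:Z - (countU (Psi d))%:Z)%R.
Proof.
move=> Hd.
have Hsz := Psi_size d.
have AU := cU_eq Hd (leqnn n); rewrite Rc_all // in AU.
have cUn1 : cU d n.+1 = cU d n.
  by rewrite /cU iotaS1 count_cat /= (isU_letter d n.+1) ltnn /= !addn0.
have CU : countU (Psi d) + #|d| = n.
  by rewrite -(take_size (Psi d)) Hsz countU_take // cUn1.
have CD : countD (Psi d) + #|d| = n.
  rewrite -(take_size (Psi d)) Hsz countD_take //.
  by have := cD_eq Hd (leqnn n.+1); rewrite Lc_all.
split; last by lia.
rewrite /Mbar /motzkin; split; first split; first exact: Hsz.
  split; first lia.
- move=> k; rewrite Hsz => Hk; rewrite countU_take // countD_take //.
  case: (ltnP n k) => Hkn.
    have -> : k = n.+1 by lia.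
    rewrite cUn1; have := cD_eq Hd (leqnn n.+1); rewrite Lc_all // => E.
    lia.
  have E1 := cU_eq Hd Hkn.
  have E2 := cD_eq Hd Hk.
  have E3 := Rc_le Hd k.+1.
  have E4 := Lc_S Hd k.
  have E5 : (EL d k : nat) <= 1 by case: (EL d k).
  rewrite -subn1 in E2; lia.
- move=> i; rewrite Hsz => Hi HU HD Hc.
  rewrite nth_Psi // in HU; last by lia.
  rewrite nth_Psi // in HD.
  have := isU_letter d i.+1; rewrite HU /= => /esym/andP[h1 h2].
  have := isD_letter d i.+2; rewrite HD /= => /esym/andP[_ h3].
  rewrite countU_take in Hc; last by lia.
  rewrite countD_take in Hc; last by lia.
  have E1 := cU_eq Hd h1.
  have E2 := cD_eq Hd (ltnW Hi).
  have E3 := Rc_S Hd i.+2.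
  have E4 := Lc_S Hd i.+1.
  rewrite (negbTE h2) in E3; rewrite (negbTE h3) in E4.
  have Heq : Rc d i.+2 = Lc d i.+2 by simpl in E2; lia.
  apply: (nopeak (t := i.+1) Hd) => //.
  move=> b Hb hb; case: (ltnP (ar b) i.+2) => // hb2.
  by have := Rc_lt Hd Hb hb hb2; rewrite Heq ltnn.
Qed.
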